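(* For any integer $\ell$, let $\mathcal D=\times_{i=1}^\ell\mathcal D_i$ and $\hat{\mathcal D}=\times_{i=1}^\ell\hat{\mathcal D}_i$ where each $\mathcal D_i,\hat{\mathcal D}_i$ is a distribution on $\mathbb R$. If $\|\mathcal D_i-\hat{\mathcal D}_i\|_K\le\xi$ for all $i$, then $\left|\Pr_{\mathcal D}[\mathcal E]-\Pr_{\hat{\mathcal D}}[\mathcal E]\right|\le2\xi\ell$ for every single-intersecting event $\mathcal E\subseteq\mathbb R^\ell$.
   Context: The Kolmogorov distance is $\|P-Q\|_K=\sup_{x\in\mathbb R}|\Pr_{X\sim P}[X\le x]-\Pr_{X\sim Q}[X\le x]|$. An event $\mathcal E\subseteq\mathbb R^\ell$ is single-intersecting if for every $i\in[\ell]$ and every $a_{-i}\in\mathbb R^{\ell-1}$, the intersection of $\mathcal E$ with the line $\{x:x_{-i}=a_{-i}\}$ is of the form $\{x:x_{-i}=a_{-i},\ x_i\in[\underline a,\bar a]\}$ (an interval, possibly empty, endpoints allowed to be $\pm\infty$). *)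

(* Defs.v *)
From mathcomp Require Import all_boot all_order all_algebra.
From mathcomp Require Import all_classical all_reals all_analysis.
Import Order.TTheory GRing.Theory Num.Theory.
Local Open Scope classical_set_scope.
Local Open Scope ring_scope.
Local Open Scope ereal_scope.

Set Implicit Arguments.
Unset Strict Implicit.
Unset Printing Implicit Defensive.

Definition kolmogorov_dist (R : realType) (P Q : probability R R) : \bar R :=
  ereal_sup [set `|P `]-oo, x]%classic - Q `]-oo, x]%classic| | x in [set: R]].

(* P (a probability on R^l, realized as l.-tuple R with the product
   sigma-algebra generated by the coordinates) is the product distribution
   of the D i : it assigns to every measurable box prod_i A_i the product
   of the D i (A i).  (The product measure is unique, boxes form a
   pi-system generating the sigma-algebra.) *)
Definition is_product_prob (R : realType) (l : nat)
    (D : 'I_l -> probability R R) (P : probability (l.-tuple R) R) : Prop :=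
  forall A : 'I_l -> set R, (forall i, measurable (A i)) ->
    P [set x | forall i, A i (tnth x i)] = \prod_(i < l) D i (A i).

(* E is single-intersecting: for every coordinate i and every point a,
   the intersection of E with the line {x : x_{-i} = a_{-i}} is
   {x on that line : lo <= x_i <= hi} for some extended reals lo, hi
   (possibly empty: lo > hi; infinite endpoints allowed). *)
Definition single_intersecting (R : realType) (l : nat)
    (E : set (l.-tuple R)) : Prop :=
  forall (i : 'I_l) (a : l.-tuple R), exists lo hi : \bar R,
    forall x : l.-tuple R, (forall j, j != i -> tnth x j = tnth a j) ->
      (E x <-> lo <= (tnth x i)%:E <= hi).

(* Main.v *)
Require Import Defs.
From HB Require Import structures.
From mathcomp Require Import all_boot all_order all_algebra.
From mathcomp Require Import all_classical all_reals all_analysis.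
Import Order.TTheory GRing.Theory Num.Theory.
Local Open Scope classical_set_scope.
Local Open Scope ring_scope.
From mathcomp Require Import ring lra.
From mathcomp Require Import measurable_realfun.
Section interval.
Context (R : realType).
Local Open Scope ereal_scope.

Definition pr (nu : probability R R) (A : set R) : R := fine (nu A).

Lemma prE (nu : probability R R) A : measurable A -> nu A = (pr nu A)%:E.
Proof. by move=> mA; rewrite /pr fineK // fin_num_measure. Qed.

Lemma pr_le (nu : probability R R) A B : measurable A -> measurable B ->
  A `<=` B -> (pr nu A <= pr nu B)%R.
Proof.
move=> mA mB AB; rewrite -lee_fin -!prE //.
by apply: le_measure => //; rewrite inE.
Qed.

Lemma pr_setT (nu : probability R R) : pr nu setT = 1%R.
Proof. by rewrite /pr probability_setT. Qed.

Lemma pr_set0 (nu : probability R R) : pr nu set0 = 0%R.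
Proof. by rewrite /pr measure0. Qed.

Lemma K1 (nu1 nu2 : probability R R) (xi : R) :
  kolmogorov_dist nu1 nu2 <= xi%:E ->
  forall x, (`|pr nu1 `]-oo, x] - pr nu2 `]-oo, x]| <= xi)%R.
Proof.
move=> hK x; rewrite -lee_fin -abse_EFin EFinB -!prE; try exact: measurable_itv.
by apply: le_trans hK; apply: ereal_sup_ubound; exists x.
Qed.

Definition Fn (a : R) (n : nat) : set R := [set` `]-oo, (a - n.+1%:R^-1)%R]].

Lemma Fn_bigcup a : `]-oo, a[%classic = \bigcup_n Fn a n.
Proof.
apply/seteqP; split => [|]; last first.
  move=> x [n _]; rewrite /Fn /= !in_itv/= => /le_lt_trans; apply.
  by rewrite ltrBlDr ltrDl invr_gt0 ltr0n.
move=> x/=; rewrite in_itv/= => xa; exists (Num.truncn (a - x)^-1) => //=.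
rewrite /Fn/= in_itv/= lerBrDl addrC -lerBrDl -[leRHS]invrK.
by rewrite lef_pV2 ?posrE ?ltr0n// ?invr_gt0 ?subr_gt0// ltW// truncnS_gt.
Qed.

Lemma K2 (nu1 nu2 : probability R R) (xi : R) :
  (forall x, pr nu1 `]-oo, x] <= pr nu2 `]-oo, x] + xi)%R ->
  forall a, (pr nu1 `]-oo, a[ <= pr nu2 `]-oo, a[ + xi)%R.
Proof.
move=> h a.
have mF : forall n, measurable (Fn a n) by move=> n; exact: measurable_itv.
have ndF : {homo Fn a : n m / (n <= m)%N >-> (n <= m)%O}.
  move=> n m nm; apply/subsetPset => x; rewrite /Fn/= !in_itv/= => /le_trans; apply.
  rewrite lerD2l lerN2 lef_pV2 ?posrE ?ltr0n// ler_nat //.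
have cv := nondecreasing_cvg_mu (mu:=nu1) mF (bigcup_measurable (fun n _ => mF n)) ndF.
rewrite -Fn_bigcup in cv.
rewrite -lee_fin -prE; last exact: measurable_itv.
rewrite -(cvg_lim _ cv) //.
apply: lime_le; first by apply/cvg_ex; eexists; exact: cv.
apply: nearW => n /=; rewrite (prE _ _ (mF n)) lee_fin (le_trans (h _)) // lerD2r.
apply: pr_le; [exact: mF|exact: measurable_itv|].
move=> x; rewrite /Fn/= !in_itv/= => /le_lt_trans; apply.
by rewrite ltrBlDr ltrDl invr_gt0 ltr0n.
Qed.

End interval.
Arguments pr {R}.
Arguments prE {R}.
Arguments pr_le {R}.
Arguments pr_setT {R}.
Arguments pr_set0 {R}.
Arguments K1 {R}.
Arguments K2 {R}.
Arguments Fn {R}.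
Section interval2.
Context (R : realType).
Local Open Scope ereal_scope.
Variables (nu1 nu2 : probability R R) (xi : R).
Hypothesis hK : kolmogorov_dist nu1 nu2 <= xi%:E.

Lemma xi_ge0 : (0 <= xi)%R.
Proof. by have := K1 _ _ _ hK 0%R; apply: le_trans. Qed.

Definition Lset (e : \bar R) : set R := [set u | u%:E <= e].
Definition Sset (e : \bar R) : set R := [set u | u%:E < e].

Lemma Lset_prop e : measurable (Lset e) /\
  (`|pr nu1 (Lset e) - pr nu2 (Lset e)| <= xi)%R.
Proof.
have x0 := xi_ge0.
case: e => [r| |].
- have -> : Lset r%:E = `]-oo, r]%classic.
    by apply/seteqP; split => u; rewrite /Lset /= in_itv /= lee_fin.
  split; [exact: measurable_itv|exact: K1].
- have -> : Lset +oo = setT by apply/seteqP; split => u //= _; rewrite /Lset /= leey.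
  by split => //; rewrite !pr_setT subrr normr0.
- have -> : Lset -oo = set0.
    by apply/seteqP; split => u //=; rewrite /Lset /= leeNy_eq.
  by split => //; rewrite !pr_set0 subrr normr0.
Qed.

Lemma Sset_prop e : measurable (Sset e) /\
  (`|pr nu1 (Sset e) - pr nu2 (Sset e)| <= xi)%R.
Proof.
have x0 := xi_ge0.
case: e => [r| |].
- have -> : Sset r%:E = `]-oo, r[%classic.
    by apply/seteqP; split => u; rewrite /Sset /= in_itv /= lte_fin.
  split; first exact: measurable_itv.
  have h12 : forall x, (pr nu1 `]-oo, x] <= pr nu2 `]-oo, x] + xi)%R.
    by move=> x; have := K1 _ _ _ hK x; rewrite ler_norml => /andP[h1 h2]; lra.
  have h21 : forall x, (pr nu2 `]-oo, x] <= pr nu1 `]-oo, x] + xi)%R.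
    by move=> x; have := K1 _ _ _ hK x; rewrite ler_norml => /andP[h1 h2]; lra.
  have := K2 _ _ _ h12 r; have := K2 _ _ _ h21 r.
  rewrite ler_norml => h1 h2; apply/andP; split; lra.
- have -> : Sset +oo = setT by apply/seteqP; split => u //= _; rewrite /Sset /= ltry.
  by split => //; rewrite !pr_setT subrr normr0.
- have -> : Sset -oo = set0.
    by apply/seteqP; split => u //=; rewrite /Sset /= ltNge leNye.
  by split => //; rewrite !pr_set0 subrr normr0.
Qed.

Definition Iset (lo hi : \bar R) : set R := [set u : R | lo <= u%:E <= hi].

Lemma itv_prop (lo hi : \bar R) :
  measurable (Iset lo hi) /\
  (`|pr nu1 (Iset lo hi) - pr nu2 (Iset lo hi)| <= 2 * xi)%R.
Proof.
rewrite /Iset.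
have x0 := xi_ge0.
have [lohi|hilo] := leP lo hi; last first.
  have -> : [set u : R | lo <= u%:E <= hi] = set0.
    apply/seteqP; split => u //= /andP[a b].
    by have := lt_le_trans hilo (le_trans a b); rewrite ltxx.
  by split => //; rewrite !pr_set0 subrr normr0 mulr_ge0.
have -> : [set u : R | lo <= u%:E <= hi] = Lset hi `\` Sset lo.
  apply/seteqP; split => u /=; rewrite /Lset /Sset /=.
    by move=> /andP[a b]; split => //; rewrite leNgt in a; apply/negP.
  by move=> [a /negP b]; rewrite -leNgt in b; rewrite a b.
have [mL hL] := Lset_prop hi; have [mS hS] := Sset_prop lo.
have SL : Lset hi `&` Sset lo = Sset lo.
  apply/setIidr => u; rewrite /Lset /Sset /= => /ltW/le_trans; exact.
have eq nu : pr nu (Lset hi `\` Sset lo) = (pr nu (Lset hi) - pr nu (Sset lo))%R.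
  have fL : nu (Lset hi) < +oo by rewrite (prE nu _ mL) ltry.
  by rewrite [in LHS]/pr measureD // SL fineB // fin_num_measure.
split; first exact: measurableD.
rewrite !eq.
move: hL hS; rewrite !ler_norml => /andP[h1 h2] /andP[h3 h4].
apply/andP; split; lra.
Qed.

End interval2.

Section boxes.
Context (R : realType) (l : nat).
Local Open Scope ereal_scope.

Definition box (A : 'I_l -> set R) : set (l.-tuple R) :=
  [set x | forall i, A i (tnth x i)].

Definition boxes : set (set (l.-tuple R)) :=
  [set B | exists A : 'I_l -> set R, (forall i, measurable (A i)) /\ B = box A].

Lemma box_measurable A : (forall i, measurable (A i)) -> measurable (box A).
Proof.
move=> mA.
have -> : box A = \bigcap_(i in [set: 'I_l]) (setT `&` (tnth (T:=R))^~ i @^-1` A i).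
  by apply/seteqP; split => x /=; [move=> h i _; split|move=> h i; case: (h i)].
apply: fin_bigcap_measurable; first exact: finite_finset.
by move=> i _; apply: measurable_tnth.
Qed.

Lemma measurable_boxes E : measurable E -> <<s boxes >> E.
Proof.
move=> mE; move: mE; rewrite /measurable /= /g_sigma_preimage.
apply: sub_sigma_algebra2 => X.
rewrite -bigcup_seq /= => -[i _ [B mB <-]].
exists (fun j => if j == i then B else setT); split.
  by move=> j; case: ifP.
apply/seteqP; split => x /=.
  by move=> [_ xB] j; case: eqP => [->|].
by move=> h; split => //; have := h i; rewrite eqxx.
Qed.

Lemma boxes_setI : setI_closed boxes.
Proof.
move=> _ _ [A [mA ->]] [B [mB ->]]; exists (fun i => A i `&` B i); split.
  by move=> i; exact: measurableI.
apply/seteqP; split => x /=.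
  by move=> [h1 h2] i; split.
by move=> h; split => i; case: (h i).
Qed.

Lemma box_setT : box (fun _ => setT) = setT.
Proof. by apply/seteqP; split. Qed.

Lemma tuple_unique (m1 m2 : {measure set (l.-tuple R) -> \bar R}) :
  m1 setT < +oo ->
  (forall A, (forall i, measurable (A i)) -> m1 (box A) = m2 (box A)) ->
  forall E, measurable E -> m1 E = m2 E.
Proof.
move=> m1oo h E mE.
have Gm : boxes `<=` measurable by move=> _ [A [mA ->]]; exact: box_measurable.
have Gg : forall n : nat, boxes ((fun _ => setT) n).
  by move=> n; exists (fun _ => setT); split => //; rewrite box_setT.
have gcov : \bigcup_(k : nat) ((fun _ => [set: l.-tuple R]) k) = setT.
  by apply/seteqP; split => x // _; exists 0%N.
apply: (@g_sigma_algebra_measure_unique _ R _ boxes Gm (fun _ => setT) Gg gcov m1 m2 boxes_setI).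
- by move=> _ [A [mA ->]]; exact: h.
- by move=> _.
- exact: measurable_boxes.
Qed.
End boxes.
Arguments Iset {R}.
Arguments Lset {R}.
Arguments Sset {R}.
Arguments xi_ge0 {R nu1 nu2 xi}.
Arguments itv_prop {R nu1 nu2 xi}.
Arguments box {R l}.
Arguments boxes {R l}.
Arguments box_measurable {R l}.
Arguments tuple_unique {R l}.
Section fubini_step.
Context (R : realType).
Local Open Scope ereal_scope.

Lemma int_bound d (T : measurableType d) (mu : {measure set T -> \bar R})
  (g1 g2 : T -> \bar R) (c : R) :
  (0 <= c)%R -> mu setT = 1 ->
  (forall z, 0 <= g1 z) -> (forall z, 0 <= g2 z) ->
  measurable_fun setT g1 -> measurable_fun setT g2 ->
  (forall z, g1 z <= g2 z + c%:E) ->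
  \int[mu]_z g1 z <= \int[mu]_z g2 z + c%:E.
Proof.
move=> c0 mu1 g10 g20 mg1 mg2 h.
apply: le_trans (ge0_le_integral mu measurableT (f2 := fun z => g2 z + c%:E) _ mg1 _ _) _.
- by move=> z _.
- by apply: emeasurable_funD => //; exact: measurable_cst.
- by move=> z _; exact: h.
rewrite ge0_integralD //; try solve [exact: measurable_cst | by move=> z _; rewrite ?lee_fin].
by rewrite (integral_cst mu measurableT) mu1 mule1.
Qed.

Arguments int_bound {d T mu g1 g2 c}.

Lemma int_fin d (T : measurableType d) (mu : {measure set T -> \bar R})
  (g : T -> \bar R) :
  mu setT = 1 -> (forall z, 0 <= g z <= 1) -> measurable_fun setT g ->
  \int[mu]_z g z \is a fin_num.
Proof.
move=> mu1 h mg; rewrite ge0_fin_numE; last by apply: integral_ge0 => z _; case/andP: (h z).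
apply: le_lt_trans (ge0_le_integral mu measurableT (f2 := cst 1) _ mg _ _) _.
- by move=> z _; case/andP: (h z).
- exact: measurable_cst.
- by move=> z _; case/andP: (h z).
by rewrite integral_cst // mu1 mule1 ltry.
Qed.

Arguments int_fin {d T mu g}.

Lemma fubini_step d (T : measurableType d) (mu : {measure set T -> \bar R})
  (nu1 nu2 : probability R R) (xi : R) :
  kolmogorov_dist nu1 nu2 <= xi%:E -> mu setT = 1 ->
  forall A : set (T * R), measurable A ->
  (forall z, exists lo hi, xsection A z = Iset lo hi) ->
  (`| fine ((mu \x nu1) A) - fine ((mu \x nu2) A) | <= 2 * xi)%R.
Proof.
move=> hK mu1 A mA hA.
have x0 := xi_ge0 hK.
have mf1 := measurable_fun_xsection nu1 mA.
have mf2 := measurable_fun_xsection nu2 mA.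
have b12 : forall z, nu1 (xsection A z) <= nu2 (xsection A z) + (2 * xi)%:E.
  move=> z; have [lo [hi ->]] := hA z; have [mI hI] := itv_prop hK lo hi.
  rewrite (prE nu1 _ mI) (prE nu2 _ mI) -EFinD lee_fin.
  by move: hI; rewrite ler_norml => /andP[? ?]; lra.
have b21 : forall z, nu2 (xsection A z) <= nu1 (xsection A z) + (2 * xi)%:E.
  move=> z; have [lo [hi ->]] := hA z; have [mI hI] := itv_prop hK lo hi.
  rewrite (prE nu1 _ mI) (prE nu2 _ mI) -EFinD lee_fin.
  by move: hI; rewrite ler_norml => /andP[? ?]; lra.
have c0 : (0 <= 2 * xi)%R by rewrite mulr_ge0.
have i12 := int_bound c0 mu1 (fun z => measure_ge0 _ _) (fun z => measure_ge0 _ _) mf1 mf2 b12.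
have i21 := int_bound c0 mu1 (fun z => measure_ge0 _ _) (fun z => measure_ge0 _ _) mf2 mf1 b21.
have p01 (nu : probability R R) z : 0 <= nu (xsection A z) <= 1.
  by rewrite measure_ge0 /= probability_le1 //; exact: measurable_xsection.
have f1 := int_fin mu1 (p01 nu1) mf1.
have f2 := int_fin mu1 (p01 nu2) mf2.
rewrite /product_measure1 /=.
move: i12 i21 f1 f2.
set a := \int[mu]_x _; set b := \int[mu]_x _.
move=> i12 i21 fa fb.
rewrite -(fineK fa) -(fineK fb) in i12 i21.
rewrite -!EFinD !lee_fin in i12 i21.
by rewrite ler_norml; apply/andP; split; lra.
Qed.

End fubini_step.
Arguments fubini_step {R d T mu nu1 nu2 xi}.

Definition pf (R : realType) d1 d2 (T1 : measurableType d1) (T2 : measurableType d2)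
  (m : set T1 -> \bar R) (f : T1 -> T2) (mf : measurable_fun setT f) : set T2 -> \bar R :=
  fun A => m (f @^-1` A).
Arguments pf {R d1 d2 T1 T2} m {f} mf.

Section pf_measure.
Local Open Scope ereal_scope.
Context (R : realType) d d' (T1 : measurableType d) (T2 : measurableType d').
Variables (m : {measure set T1 -> \bar R}) (f : T1 -> T2).
Variable (mf : measurable_fun [set: T1] f).

Let pf0 : pf m mf set0 = 0.
Proof. by rewrite /pf preimage_set0 measure0. Qed.

Let pf_ge0 A : 0 <= pf m mf A.
Proof. exact: measure_ge0. Qed.

Let pf_sigma_additive : semi_sigma_additive (pf m mf).
Proof.
move=> F mF tF mUF; rewrite /pf preimage_bigcup.
apply: measure_semi_sigma_additive.
- by move=> n; rewrite -[X in measurable X]setTI; exact: mf.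
- apply/trivIsetP => /= i j _ _ ij; rewrite -preimage_setI.
  by move/trivIsetP : tF => /(_ _ _ _ _ ij) ->//; rewrite preimage_set0.
- by rewrite -preimage_bigcup -[X in measurable X]setTI; exact: mf.
Qed.

HB.instance Definition _ := isMeasure.Build _ _ _
  (pf m mf) pf0 pf_ge0 pf_sigma_additive.

End pf_measure.

Section hybrid.
Local Open Scope ereal_scope.
Context (R : realType) (l : nat) (D Dh : 'I_l -> probability R R)
  (P Ph : probability (l.-tuple R) R).
Hypotheses (hP : is_product_prob D P) (hPh : is_product_prob Dh Ph).

Definition mix (k : nat) (z : l.-tuple R * l.-tuple R) : l.-tuple R :=
  [tuple (if (i < k)%N then tnth z.1 i else tnth z.2 i) | i < l].

Definition gmix (k : 'I_l) (w : (l.-tuple R * l.-tuple R) * R) : l.-tuple R :=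
  [tuple (if (i < k)%N then tnth w.1.1 i else if i == k then w.2 else tnth w.1.2 i) | i < l].

Lemma measurable_mix k : measurable_fun setT (mix k).
Proof.
apply/measurable_fun_tnthP => i.
have -> : (tnth (T:=R))^~ i \o mix k =
    (fun z => if (i < k)%N then tnth z.1 i else tnth z.2 i).
  by apply/funext => z; rewrite /= tnth_mktuple.
case: (i < k)%N.
- exact: measurableT_comp (measurable_tnth i) measurable_fst.
- exact: measurableT_comp (measurable_tnth i) measurable_snd.
Qed.

Lemma measurable_gmix k : measurable_fun setT (gmix k).
Proof.
apply/measurable_fun_tnthP => i.
have -> : (tnth (T:=R))^~ i \o gmix k =
    (fun w => if (i < k)%N then tnth w.1.1 i else if i == k then w.2 else tnth w.1.2 i).
  by apply/funext => z; rewrite /= tnth_mktuple.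
case: (i < k)%N; last case: (i == k).
- exact: measurableT_comp (measurable_tnth i) (measurableT_comp measurable_fst measurable_fst).
- exact: measurable_snd.
- exact: measurableT_comp (measurable_tnth i) (measurableT_comp measurable_snd measurable_fst).
Qed.

Definition M := P \x Ph.

Lemma M1 : M setT = 1.
Proof.
rewrite /M -setXTT product_measure1E //.
by transitivity (1 * 1 : \bar R); [congr (_ * _); exact: probability_setT | exact: mule1].
Qed.

Definition H (k : nat) (E : set (l.-tuple R)) := M (mix k @^-1` E).


Lemma prob1 d (T : measurableType d) (p : probability T R) : p setT = 1.
Proof. exact: probability_setT. Qed.

Lemma prod_split (p : pred 'I_l) (a b : 'I_l -> \bar R) :
  (\prod_(i < l) (if p i then a i else 1)) * (\prod_(i < l) (if p i then 1 else b i)) =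
  \prod_(i < l) (if p i then a i else b i).
Proof.
rewrite -big_split /=; apply: eq_bigr => i _.
by case: (p i); rewrite ?mule1 ?mul1e.
Qed.

Lemma Hbox k (A : 'I_l -> set R) : (forall i, measurable (A i)) ->
  H k (box A) = \prod_(i < l) (if (i < k)%N then D i (A i) else Dh i (A i)).
Proof.
move=> mA; rewrite /H.
have -> : mix k @^-1` box A =
    box (fun i => if (i < k)%N then A i else setT) `*`
    box (fun i => if (i < k)%N then setT else A i).
  apply/seteqP; split => -[x y] /=.
    move=> h; split => i; have := h i; rewrite tnth_mktuple; by case: ifP.
  move=> [h1 h2] i; have := h1 i; have := h2 i; rewrite tnth_mktuple; by case: ifP.
have mb1 : measurable (box (fun i => if (i < k)%N then A i else setT)).
  by apply: box_measurable => i; case: ifP.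
have mb2 : measurable (box (fun i => if (i < k)%N then setT else A i)).
  by apply: box_measurable => i; case: ifP.
rewrite /M product_measure1E //.
rewrite -(prod_split (fun i : 'I_l => (i < k)%N)).
have mA1 : forall i : 'I_l, measurable (if (i < k)%N then A i else setT) by move=> i; case: ifP.
have mA2 : forall i : 'I_l, measurable (if (i < k)%N then setT else A i) by move=> i; case: ifP.
congr (_ * _).
  etransitivity; first exact: (hP _ mA1).
  apply: eq_bigr => i _; case: ifP => // _; exact: prob1.
etransitivity; first exact: (hPh _ mA2).
apply: eq_bigr => i _; case: ifP => // _; exact: prob1.
Qed.

Lemma Gbox (k : 'I_l) (nu : probability R R) (A : 'I_l -> set R) :
  (forall i, measurable (A i)) ->
  (M \x nu) (gmix k @^-1` box A) =
  H k (box (fun i => if i == k then setT else A i)) * nu (A k).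
Proof.
move=> mA.
have -> : gmix k @^-1` box A =
    (mix k @^-1` box (fun i => if i == k then setT else A i)) `*` A k.
  apply/seteqP; split => -[[x y] u] /=.
    move=> h; split.
      move=> i; rewrite tnth_mktuple; have := h i; rewrite tnth_mktuple.
      have [->|ne] := eqVneq i k; first by [].
      by [].
    by have := h k; rewrite tnth_mktuple ltnn eqxx.
  move=> [h1 h2] i; rewrite tnth_mktuple; have := h1 i; rewrite tnth_mktuple.
  have [->|ne] := eqVneq i k; first by rewrite ltnn.
  by [].
rewrite product_measure1E //.
rewrite -[X in measurable X]setTI; apply: measurable_mix => //.
by apply: box_measurable => i; case: ifP.
Qed.

Lemma prod_k (k : 'I_l) (F G : 'I_l -> \bar R) c :
  F k = c -> G k = 1 -> (forall i, i != k -> F i = G i) ->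
  \prod_(i < l) F i = (\prod_(i < l) G i) * c.
Proof.
move=> <- Gk FG.
rewrite (bigD1 k) //= [in RHS](bigD1 k) //= Gk mul1e muleC.
by congr (_ * _); apply: eq_bigr => i ik; exact: FG.
Qed.

Lemma tuple_measurable_prod (k : 'I_l) (nu : probability R R) E :
  measurable E -> measurable (gmix k @^-1` E).
Proof.
by move=> mE; rewrite -[X in measurable X]setTI; apply: measurable_gmix.
Qed.

Lemma HstepD (k : 'I_l) E : measurable E ->
  (M \x D k) (gmix k @^-1` E) = H k.+1 E.
Proof.
move=> mE.
have h1 : pf (M \x D k) (measurable_gmix k) setT < +oo.
  rewrite /pf preimage_setT -setXTT product_measure1E //.
  have e : forall a b : \bar R, a = 1 -> b = 1 -> a * b < +oo.
    by move=> a b -> ->; rewrite mule1 ltry.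
  apply: e; [exact: M1 | exact: prob1].
have h2 : forall A, (forall i, measurable (A i)) ->
    pf (M \x D k) (measurable_gmix k) (box A) = pf M (measurable_mix k.+1) (box A).
  move=> A mA; rewrite /pf Gbox // -/(H k.+1 (box A)) !Hbox //; last first.
    by move=> i; case: ifP.
  symmetry; apply: (prod_k k).
  + by rewrite /= ltnSn.
  + by rewrite ltnn eqxx; exact: prob1.
  + move=> i ik; rewrite ltnS leq_eqVlt (negbTE ik).
    by rewrite (negbTE (ik : (i : nat) != k)).
exact: (tuple_unique _ _ h1 h2 E mE).
Qed.


Lemma HstepDh (k : 'I_l) E : measurable E ->
  (M \x Dh k) (gmix k @^-1` E) = H k E.
Proof.
move=> mE.
have h1 : pf (M \x Dh k) (measurable_gmix k) setT < +oo.
  rewrite /pf preimage_setT -setXTT product_measure1E //.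
  have e : forall a b : \bar R, a = 1 -> b = 1 -> a * b < +oo.
    by move=> a b -> ->; rewrite mule1 ltry.
  apply: e; [exact: M1 | exact: prob1].
have h2 : forall A, (forall i, measurable (A i)) ->
    pf (M \x Dh k) (measurable_gmix k) (box A) = pf M (measurable_mix k) (box A).
  move=> A mA; rewrite /pf Gbox // -/(H k (box A)) !Hbox //; last first.
    by move=> i; case: ifP.
  symmetry; apply: (prod_k k).
  + by rewrite /= ltnn.
  + by rewrite ltnn eqxx; exact: prob1.
  + by move=> i ik; rewrite (negbTE ik).
exact: (tuple_unique _ _ h1 h2 E mE).
Qed.

Lemma H0 E : measurable E -> H 0 E = Ph E.
Proof.
move=> mE; rewrite /H.
have -> : mix 0 @^-1` E = setT `*` E.
  apply/seteqP; split => -[x y] /=.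
    suff -> : mix 0 (x, y) = y by [].
    by apply: eq_from_tnth => i; rewrite tnth_mktuple.
  move=> [_]; suff -> : mix 0 (x, y) = y by [].
  by apply: eq_from_tnth => i; rewrite tnth_mktuple.
rewrite /M product_measure1E //.
have e : forall a b : \bar R, a = 1 -> a * b = b by move=> a b ->; rewrite mul1e.
apply: e; exact: prob1.
Qed.

Lemma Hl E : measurable E -> H l E = P E.
Proof.
move=> mE; rewrite /H.
have -> : mix l @^-1` E = E `*` setT.
  apply/seteqP; split => -[x y] /=.
    suff -> : mix l (x, y) = x by [].
    by apply: eq_from_tnth => i; rewrite tnth_mktuple ltn_ord.
  move=> [+ _]; suff -> : mix l (x, y) = x by [].
  by apply: eq_from_tnth => i; rewrite tnth_mktuple ltn_ord.
rewrite /M product_measure1E //.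
have e : forall a b : \bar R, b = 1 -> a * b = a by move=> a b ->; rewrite mule1.
apply: e; exact: prob1.
Qed.

Lemma Hstep (xi : R) (k : 'I_l) E :
  kolmogorov_dist (D k) (Dh k) <= xi%:E ->
  measurable E -> single_intersecting E ->
  (`| fine (H k.+1 E) - fine (H k E) | <= 2 * xi)%R.
Proof.
move=> hK mE hE.
rewrite -HstepD // -HstepDh //.
have := (@fubini_step _ _ _ M (D k) (Dh k) xi hK M1 (gmix k @^-1` E) (tuple_measurable_prod k (D k) E mE)); apply.
move=> z.
have [lo [hi h]] := hE k (gmix k (z, 0%R)).
exists lo, hi; apply/seteqP; split => u; rewrite /xsection /Iset /= inE /=.
  rewrite (h (gmix k (z, u))) ?tnth_mktuple ?ltnn ?eqxx //.
  move=> j jk; rewrite !tnth_mktuple (negbTE jk) //.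
move=> hu; rewrite (h (gmix k (z, u))) ?tnth_mktuple ?ltnn ?eqxx //.
move=> j jk; rewrite !tnth_mktuple (negbTE jk) //.
Qed.

End hybrid.
Arguments H {R l}.

Local Open Scope ereal_scope.

Theorem mainTheorem18 (R : realType) (l : nat) (xi : R)
    (D Dh : 'I_l -> probability R R)
    (P Ph : probability (l.-tuple R) R) :
  is_product_prob D P -> is_product_prob Dh Ph ->
  (forall i, kolmogorov_dist (D i) (Dh i) <= xi%:E) ->
  forall E : set (l.-tuple R), measurable E -> single_intersecting E ->
    `|P E - Ph E| <= (2 * xi * l%:R)%:E.
Proof.
move=> hP hPh hK E mE hE.
have tele : forall k, (k <= l)%N ->
    (`| fine (H P Ph k E) - fine (H P Ph 0 E) | <= 2 * xi * k%:R)%R.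
  elim => [_|k IH kl]; first by rewrite subrr normr0 mulr0.
  have kl' : (k < l)%N by [].
  have := @Hstep R l D Dh P Ph hP hPh xi (Ordinal kl') E (hK _) mE hE => /= hs.
  have := IH (ltnW kl') => hi.
  rewrite (le_trans (_ : _ <= `|fine (H P Ph k.+1 E) - fine (H P Ph k E)| + `|fine (H P Ph k E) - fine (H P Ph 0 E)|)%R) //.
    by have := ler_normD (fine (H P Ph k.+1 E) - fine (H P Ph k E))%R (fine (H P Ph k E) - fine (H P Ph 0 E))%R; rewrite addrA subrK.
  by rewrite -[(k.+1)%:R]natr1 mulrDr mulr1 addrC; exact: lerD.
have := tele l (leqnn l).
rewrite Hl // H0 //.
rewrite -[P E]fineK ?fin_num_measure // -[Ph E]fineK ?fin_num_measure //.
Qed.
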